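(* Assume $W>L$. For a generic signal $x\in\mathbb{C}^N$ and a generic window $w\in\mathbb{C}^W$, the pair $(x,w)$ is uniquely determined, modulo the scaling ambiguities described below, by a suitably chosen set of $N+W-L$ of the blind STFT measurements $\hat y_{x,w}[k,m]$. That is, there is a set $\Omega$ of $N+W-L$ index pairs $(k,m)$ such that for generic $(x,w)$, whenever $(x',w')\in\mathbb{C}^N\times\mathbb{C}^W$ satisfies $\hat y_{x',w'}[k,m]=\hat y_{x,w}[k,m]$ for all $(k,m)\in\Omega$, there exists $\lambda\in(\mathbb{C}^\times)^L$ with $(x',w')=\lambda\circ(x,w)$.
   Context: Let $N\ge W>L\ge 1$ be integers. Signals $x\in\mathbb{C}^N$ and windows $w\in\mathbb{C}^W$ are extended by zero outside $\{0,\ldots,N-1\}$, resp. $\{0,\ldots,W-1\}$. The blind STFT is $\hat y_{x,w}[k,m]=\sum_{n=0}^{N-1}x[n]w[mL-n]e^{-2\pi i kn/N}$ for integers $k$ and $m=0,\ldots,M-1$, $M=\lceil (N+W-1)/L\rceil$. For $\lambda=(\lambda_0,\ldots,\lambda_{L-1})\in(\mathbb{C}^\times)^L$, the scaling action is $\lambda\circ(x,w)=(x',w')$ with $x'[n]=\lambda_{n\bmod L}x[n]$ and $w'[n]=\lambda^{-1}_{(L-n)\bmod L}w[n]$. ''For generic $(x,w)$'' means: the set of pairs $(x,w)$ for which the conclusion fails is contained in the zero set of a nonzero polynomial in the real and imaginary parts of the entries of $x$ and $w$. *)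

(* Defs.v *)
(* The complex field is modelled by an arbitrary
   numClosedFieldType C (algebraically closed field with conjugation,
   real/imaginary parts). *)
From HB Require Import structures.
From mathcomp Require Import all_boot all_order all_algebra.
Set Implicit Arguments. Unset Strict Implicit. Unset Printing Implicit Defensive.
Import Order.TTheory GRing.Theory Num.Theory.
Local Open Scope ring_scope.

Section Defs.
Variable C : numClosedFieldType.

Definition zext (K : nat) (f : 'I_K -> C) (z : int) : C :=
  match z with
  | Posz n => oapp f 0 (insub n : option 'I_K)
  | Negz _ => 0
  end.

(* e^{-2 pi i / N} : N.-root (-1) = e^{i pi / N} (minimal argument root) *)
Definition omegaN (N : nat) : C := ((N.-root (-1 : C)) ^+ 2)^-1.

Definition Mdim (N W L : nat) : nat := (((N + W - 1) + (L - 1)) %/ L)%N.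

Definition stft (N W L : nat) (x : 'I_N -> C) (w : 'I_W -> C) (k m : nat) : C :=
  \sum_(n < N) x n * zext w ((m * L)%:Z - n%:Z) * omegaN N ^+ (k * n).

Definition lamAt (L : nat) (lam : 'I_L -> C) (j : nat) : C :=
  oapp lam 0 (insub (j %% L)%N : option 'I_L).

Definition scaled (N W L : nat) (lam : 'I_L -> C)
  (x : 'I_N -> C) (w : 'I_W -> C) (x' : 'I_N -> C) (w' : 'I_W -> C) : Prop :=
  (forall n : 'I_N, x' n = lamAt lam n * x n) /\
  (forall n : 'I_W, w' n = (lamAt lam ((L - n %% L) %% L)%N)^-1 * w n).

(* Multivariate polynomials over C in variables indexed by a finite type T,
   given as a list of terms (coefficient, exponent vector). *)
Definition mpoly (T : finType) := seq (C * {ffun T -> nat}).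

Definition mp_coef (T : finType) (P : mpoly T) (e : {ffun T -> nat}) : C :=
  \sum_(t <- P | t.2 == e) t.1.

Definition mp_nonzero (T : finType) (P : mpoly T) : Prop :=
  exists e, mp_coef P e != 0.

Definition mp_eval (T : finType) (P : mpoly T) (v : T -> C) : C :=
  \sum_(t <- P) t.1 * \prod_(i : T) v i ^+ t.2 i.

(* real variables: Re / Im of the entries of x and w *)
Definition genvar (N W : nat) : finType := (('I_N + 'I_W) * bool)%type.

Definition realcoords (N W : nat) (x : 'I_N -> C) (w : 'I_W -> C)
  (v : genvar N W) : C :=
  let z := match v.1 with inl i => x i | inr j => w j end in
  if v.2 then 'Re z else 'Im z.

End Defs.

(* Main.v *)
Require Import Defs.
From HB Require Import structures.
From mathcomp Require Import all_boot all_order all_algebra.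
From mathcomp Require Import ring zify.
Import Order.TTheory GRing.Theory Num.Theory.
Set Implicit Arguments. Unset Strict Implicit. Unset Printing Implicit Defensive.
Local Open Scope ring_scope.

(* Proof outline:
   - P1: N.-root (-1) is a primitive 2N-th root of unity, hence omegaN is
     injective on exponents < N.
   - Generic condition: all entries of x and w nonzero (product of |z|^2).
   - Measurement set: window m uses frequencies 0..c_m-1 where c_m is the
     number of "new" entries appearing at window m; a Vandermonde argument
     plus a cross-ratio induction shows x'[n]w'[j] = x[n]w[j] whenever
     L | n + j, from which the scaling lambda is read off. *)


Section Prim.
Variable C : numClosedFieldType.

Lemma one_neqN1 : (1 : C) != -1.
Proof. by rewrite -subr_eq0 opprK -(natrD C 1 1) pnatr_eq0. Qed.

Lemma unit_of_pow (z : C) n : (0 < n)%N -> z ^+ n = -1 -> `|z| = 1.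
Proof.
move=> n0 h; have := congr1 (@Num.norm _ C) h; rewrite normrX normrN normr1 => /eqP.
by rewrite pexpr_eq1 // => /eqP.
Qed.

Lemma ReIm1 (z : C) : `|z| = 1 -> 'Re z ^+ 2 + 'Im z ^+ 2 = 1.
Proof. by move=> h; rewrite -normC2_Re_Im h expr1n. Qed.

Lemma inv_unit (r : C) : `|r| = 1 -> r^-1 = r^*.
Proof. by move=> h; rewrite invC_norm h expr1n invr1 mul1r. Qed.

Lemma arc (q r : C) : `|q| = 1 -> `|r| = 1 -> 0 < 'Im r ->
  'Im (q * r^-1) < 0 -> 0 < 'Im (q * r) -> 'Re r < 'Re q.
Proof.
move=> hq hr hd h1 h2; rewrite inv_unit // ImM Re_conj Im_conj in h1.
rewrite ImM in h2.
have Hq := ReIm1 hq; have Hr := ReIm1 hr.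
move: h1 h2 Hq Hr hd.
set a := 'Re q; set b := 'Im q; set c := 'Re r; set d := 'Im r.
move=> h1 h2 Hq Hr hd.
have had : 0 < a * d.
  have : 0 < (a * d + c * b) - (a * - d + c * b) by rewrite subr_gt0 (lt_trans h1 h2).
  have -> : (a * d + c * b) - (a * - d + c * b) = (a * d) * 2%:R by ring.
  by rewrite pmulr_lgt0 // ltr0n.
have ha : 0 < a by move: had; rewrite pmulr_lgt0.
have [c0|c0] := real_leP (Creal_Re r) (real0 C).
  exact: le_lt_trans c0 ha.
have p1 : 0 < a * d - c * b.
  by rewrite -oppr_lt0; have -> : - (a * d - c * b) = a * - d + c * b by ring.
have p2 : 0 < a * d + c * b by [].
have := mulr_gt0 p1 p2.
have -> : (a * d - c * b) * (a * d + c * b) = (a - c) * (a + c).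
  have -> : (a * d - c * b) * (a * d + c * b) = a ^+ 2 * d ^+ 2 - c ^+ 2 * b ^+ 2 by ring.
  have -> : d ^+ 2 = 1 - c ^+ 2 by rewrite -Hr; ring.
  have -> : b ^+ 2 = 1 - a ^+ 2 by rewrite -Hq; ring.
  ring.
by rewrite pmulr_lgt0 ?subr_gt0 // addr_gt0.
Qed.


Lemma ex_neg (R : numDomainType) (f : nat -> R) j : (0 < j)%N ->
  (forall k, f k \is Num.real) -> (forall k, f k != 0) ->
  \sum_(k < j) f k = 0 -> exists2 k, (k < j)%N & f k < 0.
Proof.
move=> j0 hr hn hs.
case: (boolP [exists k : 'I_j, f k < 0]) => [/existsP [k hk] | /existsPn hno].
  by exists k.
exfalso.
have hge : forall i : 'I_j, true -> 0 <= f i.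
  move=> i _; have := hno i.
  by case: (real_leP (real0 R) (hr i)) => // ->.
have := psumr_eq0P hge hs (i := Ordinal j0) isT.
by move=> /eqP; rewrite (negbTE (hn _)).
Qed.

Lemma sign_change (R : numDomainType) (f : nat -> R) j : (0 < j)%N ->
  (forall k, f k \is Num.real) -> (forall k, f k != 0) ->
  (forall k, f (k + j)%N = f k) -> \sum_(k < j) f k = 0 ->
  exists k, f k < 0 < f k.+1.
Proof.
move=> j0 hr hn hp hs.
have [k0 k0j hk0] := ex_neg j0 hr hn hs.
have [k1 _ hk1] : exists2 k, (k < j)%N & - f k < 0.
  apply: (ex_neg (f := fun k => - f k)) => //.
  - by move=> k; rewrite rpredN.
  - by move=> k; rewrite oppr_eq0.
  - by rewrite sumrN hs oppr0.
rewrite oppr_lt0 in hk1.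
have hk1' : 0 < f (k0 + (k1 + j - k0))%N by rewrite subnKC ?hp // ltnW // ltn_addl.
move: hk1'; move: (k1 + j - k0)%N => d.
elim: d => [|d IH]; first by rewrite addn0 => h; move: (lt_trans hk0 h); rewrite ltxx.
move=> hd.
case: (real_leP (real0 R) (hr (k0 + d)%N)) => hfd.
  have hfd' : 0 < f (k0 + d)%N by rewrite lt_def hfd hn.
  exact: IH.
by exists (k0 + d)%N; rewrite hfd -addnS.
Qed.

Definition rN N := N.-root (-1 : C).

Lemma no_better N y : (1 < N)%N -> y ^+ N = -1 -> 'Re (rN N) < 'Re y -> False.
Proof.
move=> N1 hy hlt.
case: (real_leP (real0 C) (Creal_Im y)) => h.
  by have := rootC_Re_max (ltnW N1) hy h; rewrite /rN lt_geF.
have hc : (y^*) ^+ N = -1 by rewrite -rmorphXn hy rmorphN1.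
have := rootC_Re_max (ltnW N1) hc; rewrite Im_conj oppr_ge0 (ltW h) Re_conj.
by move=> /(_ isT); rewrite /rN lt_geF.
Qed.

Lemma real_unit_sq (w : C) : w \is Num.real -> `|w| = 1 -> w ^+ 2 = 1.
Proof. by move=> hw h; rewrite -[RHS](expr1n _ 2) -h normCK conj_Creal // expr2. Qed.


Lemma Re1C : 'Re (1 : C) = 1. Proof. by apply/Creal_ReP; exact: rpred1. Qed.
Lemma Im1C : 'Im (1 : C) = 0. Proof. by apply/Creal_ImP; exact: rpred1. Qed.

Lemma rN_minimal N : (1 < N)%N -> forall j, (0 < j)%N -> rN N ^+ j = -1 -> (N <= j)%N.
Proof.
move=> N1; set r := rN N.
have rN1 : r ^+ N = -1 by rewrite /r /rN rootCK // ltnW.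
have ex : exists n, r ^+ n == -1 by exists N; rewrite rN1.
case: (ex_minnP ex) => j hj hmin.
suff jNe : j = N by move=> i _ /eqP /hmin; rewrite jNe.
have j0 : (0 < j)%N.
  by case: j hj {hmin} => //; rewrite expr0 (negbTE one_neqN1).
move/eqP: hj => hj.
have r2j : r ^+ (2 * j) = 1 by rewrite mulnC exprM hj sqrrN expr1n.
have rmod : forall n, r ^+ n = r ^+ (n %% (2 * j)).
  by move=> n; rewrite {1}(divn_eq n (2 * j)) exprD mulnC exprM r2j expr1n mul1r.
have hjN : (j <= N)%N by apply: hmin; rewrite rN1.
apply/eqP; rewrite eqn_leq hjN /= leqNgt; apply/negP => jN.
set s := (N %% (2 * j))%N.
have rs : r ^+ s = -1 by rewrite -rmod.
have s2j : (s < 2 * j)%N by rewrite ltn_pmod // muln_gt0.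
have sj : s = j.
  case: (ltngtP s j) => // hsj.
    have : (j <= s)%N by apply: hmin; rewrite rs.
    by rewrite leqNgt hsj.
  have r1 : r ^+ (s - j) = 1.
    have : r ^+ s = r ^+ (s - j) * r ^+ j by rewrite -exprD subnK // ltnW.
    by rewrite rs hj mulrN1 => /eqP; rewrite eqr_opp => /eqP <-.
  have : r ^+ j = r ^+ (2 * j - s) * r ^+ (s - j).
    by rewrite -exprD; congr (_ ^+ _); lia.
  rewrite r1 mulr1 hj => /esym h.
  have : (j <= 2 * j - s)%N by apply: hmin; rewrite h.
  lia.
set q := (N %/ (2 * j))%N.
have Nq : N = (j * (2 * q).+1)%N.
  rewrite {1}(divn_eq N (2 * j)) -/s sj -/q; nia.
have q0 : (0 < q)%N.
  rewrite lt0n; apply/negP => /eqP q0; move: Nq; rewrite q0 muln1 => Nj.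
  by move: jN; rewrite Nj ltnn.
set t := (2 * q).+1.
have sgt : (-1 : C) ^+ t = -1 by rewrite exprS exprM sqrrN expr1n expr1n mulr1.
set R := \poly_(i < t) ((-1 : C) ^+ i).
have sR : size R = t by rewrite size_poly_eq // signr_eq0.
have [v rv] : exists v, root R v.
  by apply/closed_rootP; rewrite sR /t eqSS muln_eq0 negb_or /= -lt0n q0.
move: rv; rewrite /root horner_poly => /eqP Rv.
have vt : v ^+ t = -1.
  have := subrX1 (- v) t.
  have -> : \sum_(i < t) (- v) ^+ i = \sum_(i < t) (-1) ^+ i * v ^+ i.
    by apply: eq_bigr => i _; exact: exprNn.
  rewrite Rv.
  rewrite mulr0 exprNn sgt => /eqP; rewrite subr_eq0 mulN1r => /eqP h.
  by rewrite -[v ^+ t]opprK h.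
have vN1 : v != -1.
  apply/negP => /eqP ev; move: Rv; rewrite ev.
  have -> : \sum_(i < t) (-1) ^+ i * (-1 : C) ^+ i = \sum_(i < t) 1.
    by apply: eq_bigr => i _; rewrite -exprMn mulrNN mulr1 expr1n.
  by rewrite sumr_const card_ord => /eqP; rewrite pnatr_eq0.
have v1 : v != 1.
  by apply/negP => /eqP ev; move: vt; rewrite ev expr1n => /eqP; rewrite (negbTE one_neqN1).
set z := j.-root v.
have zj : z ^+ j = v by rewrite /z rootCK.
have zN : z ^+ N = -1 by rewrite Nq exprM zj vt.
have z1 : `|z| = 1 by apply: (unit_of_pow (n := N)); rewrite ?(ltnW N1).
have r1 : `|r| = 1 by apply: (unit_of_pow (n := N)); rewrite ?(ltnW N1).
case: (ltngtP j 1) => hj1.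
- by move: j0; rewrite ltnNge -ltnS hj1.
-
  have rn1 : r != 1.
    apply/negP => /eqP e; move: rN1; rewrite e expr1n => /eqP; rewrite (negbTE one_neqN1) //.
  have rnN1 : r != -1.
    apply/eqP => e.
    have : (j <= 1)%N by apply: hmin; rewrite expr1 e.
    by rewrite leqNgt hj1.
  have r2 : r ^+ 2 != 1 by rewrite sqrf_eq1 negb_or rn1 rnN1.
  have Imr : 0 < 'Im r.
    have : 0 <= 'Im r by exact: Im_rootC_ge0.
    rewrite le_eqVlt => /orP [/eqP e|//].
    have rr : r \is Num.real by apply/Creal_ImP; rewrite -e.
    by move: r2; rewrite (real_unit_sq rr r1) eqxx.
  have rU : r \is a GRing.unit by rewrite unitfE -normr_eq0 r1 oner_eq0.
  have e2 : (r ^+ 2) ^+ j = 1 by rewrite -exprM r2j.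
  set sg := fun k => 'Im (z * (r ^+ 2) ^+ k * r^-1).
  have sgp : forall k, sg (k + j)%N = sg k.
    by move=> k; rewrite /sg exprD e2 mulr1.
  have sgr : forall k, sg k \is Num.real by move=> k; apply: Creal_Im.
  have sgn : forall k, sg k != 0.
    move=> k; apply/negP => /eqP e.
    set w := z * (r ^+ 2) ^+ k * r^-1.
    have wr : w \is Num.real by apply/Creal_ImP.
    have w1 : `|w| = 1 by rewrite /w !normrM normrV // normrX normrX r1 z1 !expr1n invr1 !mulr1.
    have w2 := real_unit_sq wr w1.
    have wj : w ^+ j = - v.
      have -> : w ^+ j = z ^+ j * ((r ^+ 2) ^+ k) ^+ j * (r^-1) ^+ j.
        by rewrite /w !exprMn.
      rewrite zj (exprAC (r ^+ 2) k j) e2 expr1n mulr1 exprVn hj invrN1.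
      by rewrite mulrN1.
    have : (w ^+ j) ^+ 2 = 1 by rewrite exprAC w2 expr1n.
    rewrite wj sqrrN => /eqP; rewrite sqrf_eq1 (negbTE v1) (negbTE vN1) //.
  have sgs : \sum_(k < j) sg k = 0.
    rewrite /sg -raddf_sum -mulr_suml -mulr_sumr.
    have -> : \sum_(i < j) (r ^+ 2) ^+ i = 0.
      have := subrX1 (r ^+ 2) j; rewrite -exprM r2j subrr => /esym /eqP.
      by rewrite mulf_eq0 subr_eq0 (negbTE r2) /= => /eqP.
    by rewrite mulr0 mul0r raddf0.
  have [k /andP [hk1 hk2]] := sign_change j0 sgr sgn sgp sgs.
  set qq := z * (r ^+ 2) ^+ k.
  have qq1 : `|qq| = 1 by rewrite /qq normrM !normrX r1 z1 !expr1n mulr1.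
  have hlt : 'Re r < 'Re qq.
    apply: arc => //.
    have e : z * (r ^+ 2) ^+ k.+1 * r^-1 = qq * r.
      by rewrite /qq exprSr expr2 !mulrA mulrK.
    by move: hk2; rewrite /sg e.
  apply: (no_better N1 _ hlt).
  have e3 : ((r ^+ 2) ^+ k) ^+ N = 1.
    by rewrite (exprAC (r ^+ 2) k N) -(exprM r 2 N) mulnC exprM rN1 sqrrN !expr1n.
  by rewrite /qq exprMn zN e3 mulr1.
-
  have r_1 : r = -1 by rewrite -hj hj1 expr1.
  have zv : z = v by rewrite -zj hj1 expr1.
  have hlt : 'Re r < 'Re z.
    rewrite r_1 raddfN /= Re1C -subr_gt0 opprK.
    have hz1 : z + 1 != 0 by rewrite zv addr_eq0.
    have : 0 < `|z + 1| ^+ 2 by rewrite exprn_gt0 // normr_gt0.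
    rewrite normC2_Re_Im raddfD /= Re1C raddfD /= Im1C addr0.
    have := ReIm1 z1.
    have -> : ('Re z + 1) ^+ 2 + 'Im z ^+ 2 = ('Re z ^+ 2 + 'Im z ^+ 2) + ('Re z + 1) * 2%:R - 1 by ring.
    move=> ->.
    have -> : 1 + ('Re z + 1) * 2%:R - 1 = ('Re z + 1) * 2%:R by ring.
    by rewrite pmulr_lgt0 // ltr0n.
  exact: (no_better N1 zN hlt).
Qed.


Lemma rN_prim N c : (0 < c)%N -> (c < N)%N -> rN N ^+ (2 * c) != 1.
Proof.
move=> c0 cN; have N1 : (1 < N)%N by apply: leq_ltn_trans cN.
set r := rN N.
have rN1 : r ^+ N = -1 by rewrite /r /rN rootCK // ltnW.
apply/negP => /eqP h.
have rmod : forall n, r ^+ n = r ^+ (n %% (2 * c)).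
  by move=> n; rewrite {1}(divn_eq n (2 * c)) exprD mulnC exprM h expr1n mul1r.
set s := (N %% (2 * c))%N.
have rs : r ^+ s = -1 by rewrite -rmod.
have s2c : (s < 2 * c)%N by rewrite ltn_pmod // muln_gt0.
have s0 : (0 < s)%N.
  by rewrite lt0n; apply/negP => /eqP e; move: rs; rewrite e expr0 => /eqP; rewrite (negbTE one_neqN1).
have Ns := rN_minimal N1 s0 rs.
have h2 : r ^+ (2 * c - s) = -1.
  have : r ^+ (2 * c) = r ^+ (2 * c - s) * r ^+ s by rewrite -exprD subnK // ltnW.
  by rewrite h rs mulrN1 => /eqP; rewrite eq_sym eqr_oppLR => /eqP.
have := @rN_minimal N N1 (2 * c - s) _ h2.
by move=> /(_ ltac:(lia)); lia.
Qed.

Lemma omega_inj N a b : (a < N)%N -> (b < N)%N ->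
  omegaN C N ^+ a = omegaN C N ^+ b -> a = b.
Proof.
wlog ab : a b / (a <= b)%N.
  move=> H aN bN e; case: (leqP a b) => h; first exact: H.
  by apply/esym/H => //; apply: ltnW.
move=> aN bN.
have -> : omegaN C N = (rN N ^+ 2)^-1 by [].
set r := rN N.
rewrite !exprVn => /invr_inj e.
case: (ltngtP a b) => // hab; last by move: ab; rewrite leqNgt hab.
have N1 : (1 < N)%N by lia.
have rN1 : r ^+ N = -1 by rewrite /r /rN rootCK // ltnW.
have r0 : r != 0.
  apply/eqP => e0; move: rN1; rewrite e0 expr0n (gtn_eqF (ltnW N1)) /= => /eqP.
  by rewrite eq_sym oppr_eq0 oner_eq0.
have r2a : (r ^+ 2) ^+ a != 0 by rewrite !expf_neq0.
have : (r ^+ 2) ^+ (b - a) = 1.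
  apply: (mulfI r2a).
  by rewrite -exprD (subnKC (ltnW hab)) mulr1 e.
have hp := @rN_prim N (b - a) ltac:(lia) ltac:(lia).
by rewrite -exprM => /eqP; rewrite -/r (negbTE hp).
Qed.

End Prim.


Section MP.
Variable C : numClosedFieldType.
Variable T : finType.

Definition mp_mul (P Q : mpoly C T) : mpoly C T :=
  [seq (a.1 * b.1, [ffun u => (a.2 u + b.2 u)%N] : {ffun T -> nat}) | a : C * {ffun T -> nat} <- P, b : C * {ffun T -> nat} <- Q].

Lemma mp_eval_mul P Q v : mp_eval (mp_mul P Q) v = mp_eval P v * mp_eval Q v.
Proof.
rewrite /mp_eval /mp_mul big_allpairs_dep /= mulr_suml; apply: eq_bigr => a _.
rewrite mulr_sumr; apply: eq_bigr => b _ /=.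
have -> : \prod_i v i ^+ [ffun u => (a.2 u + b.2 u)%N] i =
  (\prod_i v i ^+ a.2 i) * \prod_i v i ^+ b.2 i.
  by rewrite -big_split /=; apply: eq_bigr => i _; rewrite ffunE exprD.
by rewrite mulrACA.
Qed.

Lemma mp_eval_coef (P : mpoly C T) v : mp_eval P v =
  \sum_(e <- undup (map snd P)) mp_coef P e * \prod_i v i ^+ e i.
Proof.
rewrite /mp_eval.
set F := fun e : {ffun T -> nat} => \prod_i v i ^+ e i.
transitivity (\sum_(t <- P) \sum_(e <- undup (map snd P) | e == t.2) t.1 * F e).
  apply: eq_big_seq => t tP.
  rewrite -[RHS]big_filter.
  have -> : [seq x <- undup [seq i.2 | i <- P] | x == t.2] = [:: t.2].
    by apply: filter_pred1_uniq; rewrite ?undup_uniq ?mem_undup ?map_f.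
  by rewrite big_seq1.
under eq_bigr => t _ do rewrite big_mkcond.
rewrite exchange_big /=; apply: eq_bigr => e _.
rewrite /mp_coef mulr_suml [RHS]big_mkcond /=; apply: eq_bigr => t _.
by rewrite eq_sym; case: eqP.
Qed.

Lemma mp_nonzero_of (P : mpoly C T) v : mp_eval P v != 0 -> mp_nonzero P.
Proof.
move=> h; case: (boolP (all (fun e => mp_coef P e == 0) (undup (map snd P)))).
  move=> /allP hall; move: h; rewrite mp_eval_coef big_seq big1 ?eqxx //.
  by move=> e /hall /eqP ->; rewrite mul0r.
by move=> /allPn [e _ he]; exists e.
Qed.
End MP.


Lemma card_split (I J : finType) (A : {set I * J}) :
  #|A| = (\sum_(j : J) #|[set i | (i, j) \in A]|)%N.
Proof.
rewrite -sum1_card big_mkcond /=.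
transitivity (\sum_(i : I) \sum_(j : J) (if (i, j) \in A then 1 else 0))%N.
  by rewrite pair_big /=; apply: eq_bigr => -[i j] _.
rewrite exchange_big /=; apply: eq_bigr => j _.
by rewrite -sum1_card [RHS]big_mkcond /=; apply: eq_bigr => i _; rewrite inE.
Qed.

Lemma card_lt (N c : nat) : (c <= N)%N -> #|[set k : 'I_N | (k < c)%N]| = c.
Proof.
move=> cN.
have -> : [set k : 'I_N | (k < c)%N] = [set widen_ord cN i | i : 'I_c].
  apply/setP => k; rewrite inE; apply/idP/imsetP.
    by move=> kc; exists (Ordinal kc) => //; apply: val_inj.
  by case=> i _ ->; rewrite /= ltn_ord.
rewrite card_imset ?card_ord //; by move=> a b /(congr1 val) /= /val_inj.
Qed.

Section Comb.
Variables N W L : nat.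
Hypothesis hL : (1 <= L)%N.
Hypothesis hLW : (L < W)%N.
Hypothesis hWN : (W <= N)%N.

Let M := Mdim N W L.
Definition mw (j : nat) := ((j + L - 1) %/ L)%N.

Lemma mwP j : (j <= mw j * L < j + L)%N.
Proof.
have := divn_eq (j + L - 1) L; rewrite -/(mw j).
have := ltn_pmod (j + L - 1) hL.
move: (mw j) ((j + L - 1) %% L)%N => a b; nia.
Qed.

Lemma mw_lt a : (a + L <= N + W - 1)%N -> (mw a < M)%N.
Proof.
move=> h; rewrite /M /Mdim leq_divRL //.
have := mwP a; nia.
Qed.

Lemma posw_lt (j : 'I_W) : (mw j * L - j < N)%N.
Proof. have := mwP j; lia. Qed.
Lemma mww_lt (j : 'I_W) : (mw j < M)%N.
Proof. apply: mw_lt; have := ltn_ord j; lia. Qed.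
Lemma posx_lt (i : 'I_(N - L)) : (L + i < N)%N.
Proof. have := ltn_ord i; lia. Qed.
Lemma mwx_lt (i : 'I_(N - L)) : (mw (L + i) < M)%N.
Proof. apply: mw_lt; have := ltn_ord i; lia. Qed.

Definition gmap (e : 'I_W + 'I_(N - L)) : 'I_N * 'I_M :=
  match e with
  | inl j => (Ordinal (posw_lt j), Ordinal (mww_lt j))
  | inr i => (Ordinal (posx_lt i), Ordinal (mwx_lt i))
  end.

Lemma gmap_inj : injective gmap.
Proof.
case=> [j|i] [j'|i'] /= [e1 e2].
- congr inl; apply: val_inj => /=.
  have := mwP j; have := mwP j'; rewrite e2; lia.
- have := mwP j; lia.
- have := mwP j'; lia.
- by congr inr; apply: val_inj => /=; lia.
Qed.

Definition Gset := [set gmap e | e in [set: 'I_W + 'I_(N - L)]].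
Definition Sm (m : 'I_M) := [set n : 'I_N | (n, m) \in Gset].
Definition OmSet := [set km : 'I_N * 'I_M | (km.1 < #|Sm km.2|)%N].

Lemma card_Om : #|OmSet| = (N + W - L)%N.
Proof.
rewrite card_split.
have -> : (N + W - L = #|Gset|)%N.
  by rewrite card_imset ?cardsT ?card_sum ?card_ord; [lia | exact: gmap_inj].
rewrite card_split; apply: eq_bigr => m _.
rewrite -[RHS](@card_lt N); last by rewrite -[X in (_ <= X)%N]card_ord max_card.
by apply: eq_card => k; rewrite !inE.
Qed.

End Comb.


Section Zext.
Variable C : numClosedFieldType.

Lemma zext_in K (f : 'I_K -> C) (a n : nat) (j : 'I_K) :
  a = (n + j)%N -> zext f (a%:Z - n%:Z) = f j.
Proof.
move=> ->; rewrite PoszD addrAC subrr add0r /zext /=.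
by rewrite valK.
Qed.

Lemma zext_out K (f : 'I_K -> C) (a n : nat) :
  ~~ ((n <= a)%N && (a - n < K)%N) -> zext f (a%:Z - n%:Z) = 0.
Proof.
case: (leqP n a) => /= h.
  by move=> hK; rewrite subzn // /zext insubN.
move=> _.
have -> : a%:Z - n%:Z = Negz (n - a - 1).
  have e : ((n - a - 1).+1 = n - a)%N by lia.
  rewrite NegzE e -subzn; last exact: ltnW.
  by rewrite opprB.
by [].
Qed.

Lemma vander N (S : {set 'I_N}) (d : 'I_N -> C) :
  (forall n, n \notin S -> d n = 0) ->
  (forall k, (k < #|S|)%N -> \sum_(n < N) d n * omegaN C N ^+ (k * n) = 0) ->
  forall n, d n = 0.
Proof.
move=> hout hk n0.
case: (boolP (n0 \in S)) => hn0; last exact: hout.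
set om := omegaN C N.
set sq := [seq om ^+ (val i) | i <- enum (S :\ n0)].
set q := \prod_(z <- sq) ('X - z%:P).
have sq_size : size q = #|S|.
  rewrite size_prod_XsubC size_map -cardE.
  by rewrite [in RHS](cardsD1 n0) hn0.
have H : \sum_(k < #|S|) q`_k * (\sum_(n < N) d n * om ^+ (k * n)) = 0.
  by rewrite big1 // => k _; rewrite hk ?mulr0.
have H2 : \sum_(n < N) d n * q.[om ^+ n] = 0.
  rewrite -[RHS]H; under [RHS]eq_bigr do rewrite mulr_sumr.
  rewrite exchange_big /=; apply: eq_bigr => n _.
  rewrite (horner_coef_wide _ (eq_leq sq_size)) mulr_sumr; apply: eq_bigr => k _.
  by rewrite mulrCA mulnC exprM.
have qn : forall n, n != n0 -> n \in S -> q.[om ^+ n] = 0.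
  move=> n nn0 nS; apply/eqP; rewrite -/(root q _) root_prod_XsubC.
  by apply/mapP; exists n => //; rewrite mem_enum !inE nn0.
have qn0 : q.[om ^+ n0] != 0.
  rewrite -/(root q _) root_prod_XsubC; apply/mapP => -[i].
  rewrite mem_enum !inE => /andP [ni _] he.
  have /val_inj e := omega_inj (ltn_ord n0) (ltn_ord i) he.
  by move: ni; rewrite e eqxx.
move: H2; rewrite (bigD1 n0) //= big1 ?addr0.
  by move=> /eqP; rewrite mulf_eq0 (negbTE qn0) orbF => /eqP.
move=> n nn0; case: (boolP (n \in S)) => nS; first by rewrite qn ?mulr0.
by rewrite hout ?mul0r.
Qed.

End Zext.


Section Main.
Variable C : numClosedFieldType.
Variables N W L : nat.
Hypothesis hL : (1 <= L)%N.
Hypothesis hLW : (L < W)%N.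
Hypothesis hWN : (W <= N)%N.
Let M := Mdim N W L.
Variables (x x' : 'I_N -> C) (w w' : 'I_W -> C).
Hypothesis hx : forall n, x n != 0.
Hypothesis hw : forall j, w j != 0.
Hypothesis hmeas : forall km, km \in OmSet hL hLW hWN ->
  stft L x' w' km.1 km.2 = stft L x w km.1 km.2.

Definition negL (n : nat) := ((L - n %% L) %% L)%N.
Lemma negL_lt n : (negL n < L)%N. Proof. exact: ltn_pmod. Qed.
Lemma negL_dvd n : (L %| negL n + n)%N.
Proof.
have h : (n %% L <= L)%N := ltnW (ltn_pmod n hL).
by rewrite /dvdn /negL modnDml -modnDmr (subnK h) modnn.
Qed.

Lemma ML_big : (N + W - 1 <= M * L)%N.
Proof.
have := divn_eq (N + W - 1 + (L - 1)) L; rewrite -/(Mdim N W L) -/M.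
have := ltn_pmod (N + W - 1 + (L - 1)) hL.
move: M ((N + W - 1 + (L - 1)) %% L)%N => a b; nia.
Qed.

Lemma prodeq s : forall (n : 'I_N) (j : 'I_W), (n + j)%N = s -> (L %| s)%N ->
  x' n * w' j = x n * w j.
Proof.
elim/ltn_ind: s => s IH n j hs hdiv.
set m := (s %/ L)%N.
have sm : s = (m * L)%N by rewrite /m divnK.
have mM : (m < M)%N.
  rewrite /m ltn_divLR //; have := ML_big; have := ltn_ord n; have := ltn_ord j; lia.
set mo : 'I_M := Ordinal mM.
set d := fun n0 : 'I_N => x' n0 * zext w' ((mo * L)%N%:Z - n0%:Z) - x n0 * zext w ((mo * L)%N%:Z - n0%:Z).
have d0 : forall n0, d n0 = 0.
  apply: (vander (S := Sm hL hLW hWN mo)).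
  - move=> n0 hn0.
    case: (boolP ((n0 <= m * L) && (m * L - n0 < W))%N) => hin; last first.
      by rewrite /d !zext_out // !mulr0 subrr.
    move/andP: hin => [h1 h2]; set j0 : 'I_W := Ordinal h2.
    have sj0 : (mo * L = n0 + j0)%N by rewrite /= subnKC.
    rewrite /d !(zext_in _ sj0).
    case: (boolP ((n0 < L) || (m * L < n0 + L))%N) => hc.
      exfalso; move: hn0; rewrite inE; apply/negP/negPn.
      case: (ltnP n0 L) => hn0L.
        have mwj : mw L j0 = m.
          rewrite /mw (_ : (j0 + L - 1 = m * L + (L - 1 - n0))%N); last by rewrite /=; lia.
          by rewrite divnMDl // divn_small ?addn0 //; lia.
        have <- : gmap hL hLW hWN (inl j0) = (n0, mo).
          by congr pair; apply: val_inj; rewrite /= mwj //=; lia.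
        by apply: imset_f; rewrite inE.
      have hi : (n0 - L < N - L)%N by have := ltn_ord n0; lia.
      have mwi : mw L (L + Ordinal hi) = m.
        rewrite /mw /= (_ : (L + (n0 - L) + L - 1 = m * L + (n0 + L - 1 - m * L))%N); last first.
          by move: hc; rewrite ltnNge hn0L /=; lia.
        by rewrite divnMDl // divn_small ?addn0 //; move: hc; rewrite ltnNge hn0L /=; lia.
      have <- : gmap hL hLW hWN (inr (Ordinal hi)) = (n0, mo).
        by congr pair; apply: val_inj; rewrite /= ?mwi //=; lia.
      by apply: imset_f; rewrite inE.
    move: hc; rewrite negb_or -!leqNgt => /andP [hLn0 hn0L].
    apply/eqP; rewrite subr_eq0; apply/eqP.
    have n1lt : (negL j0 < N)%N by have := negL_lt j0; lia.
    have j1lt : (negL n0 < W)%N by have := negL_lt n0; lia.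
    set n1 : 'I_N := Ordinal n1lt; set j1 : 'I_W := Ordinal j1lt.
    have hs0 : (n0 + j0 = s)%N by rewrite -sj0 sm.
    have hj0 : (L <= j0)%N by rewrite /=; lia.
    have hj1 : (j1 < L)%N by exact: negL_lt.
    have hn1 : (n1 < L)%N by exact: negL_lt.
    have e01 : x' n0 * w' j1 = x n0 * w j1.
      apply: (IH (n0 + j1)%N) => //.
        lia.
      by rewrite addnC negL_dvd.
    have e10 : x' n1 * w' j0 = x n1 * w j0.
      apply: (IH (n1 + j0)%N) => //.
        lia.
      exact: negL_dvd.
    have e11 : x' n1 * w' j1 = x n1 * w j1.
      apply: (IH (n1 + j1)%N) => //.
        lia.
      have H : (L %| (negL j0 + negL n0) + (j0 + n0))%N.
        rewrite (_ : (negL j0 + negL n0 + (j0 + n0) = (negL j0 + j0) + (negL n0 + n0))%N); last by lia.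
        by rewrite dvdn_add ?negL_dvd.
      by move: H; rewrite dvdn_addl // addnC hs0.
    have nz : x' n1 * w' j1 != 0 by rewrite e11 mulf_neq0.
    apply: (mulIf nz).
    transitivity ((x' n0 * w' j1) * (x' n1 * w' j0)); first by ring.
    rewrite e01 e10 e11; ring.
  - move=> k hk.
    have kN : (k < N)%N.
      apply: (leq_trans hk); rewrite -[X in (_ <= X)%N]card_ord; exact: max_card.
    have hin : (Ordinal kN, mo) \in OmSet hL hLW hWN by rewrite inE /=.
    have := hmeas hin; rewrite /stft /= => e.
    rewrite /d; under eq_bigr do rewrite mulrBl.
    by rewrite sumrB e subrr.
have := d0 n; rewrite /d.
have sn : (mo * L = n + j)%N by rewrite /= -sm hs.
by rewrite !(zext_in _ sn) => /eqP; rewrite subr_eq0 => /eqP.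
Qed.


Lemma prodeq' (n : 'I_N) (j : 'I_W) : (L %| n + j)%N -> x' n * w' j = x n * w j.
Proof. exact: (prodeq (s := (n + j)%N)). Qed.

Lemma lamAt_val (lam : 'I_L -> C) k : lamAt lam k = lam (Ordinal (ltn_pmod k hL)).
Proof.
rewrite /lamAt; case: insubP => [i _ vi|]; last by rewrite ltn_pmod.
by rewrite /=; congr lam; apply: val_inj.
Qed.

Lemma xprime_nz (n : 'I_N) (j : 'I_W) : (L %| n + j)%N -> x' n != 0 /\ w' j != 0.
Proof.
move=> /prodeq' e.
have : x' n * w' j != 0 by rewrite e mulf_neq0.
by rewrite mulf_eq0 negb_or => /andP.
Qed.

Lemma final_scaled : exists lam : 'I_L -> C, (forall i, lam i != 0) /\ scaled lam x w x' w'.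
Proof.
have hLN : (L <= N)%N by lia.
pose lam := fun a : 'I_L => x' (widen_ord hLN a) / x (widen_ord hLN a).
exists lam; split.
  move=> a; have ja : (negL a < W)%N by have := negL_lt a; lia.
  have da : (L %| widen_ord hLN a + Ordinal ja)%N by rewrite /= addnC negL_dvd.
  have [nz _] := xprime_nz da.
  by rewrite /lam mulf_neq0 ?invr_neq0.
split.
  move=> n; rewrite lamAt_val.
  set a := Ordinal (ltn_pmod n hL).
  have jn : (negL n < W)%N by have := negL_lt n; lia.
  set j : 'I_W := Ordinal jn.
  have d1 : (L %| n + j)%N by rewrite addnC negL_dvd.
  have d2 : (L %| widen_ord hLN a + j)%N.
    by rewrite /= /dvdn modnDml -/(dvdn L (n + negL n)) addnC negL_dvd.
  have e1 := prodeq' d1; have e2 := prodeq' d2.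
  have [xa0 wj0] := xprime_nz d2.
  apply: (mulIf wj0); rewrite e1 /lam.
  have -> : x' (widen_ord hLN a) / x (widen_ord hLN a) * x n * w' j =
    x n * (x' (widen_ord hLN a) * w' j) / x (widen_ord hLN a) by ring.
  by rewrite e2; field; exact: hx.
move=> n; rewrite lamAt_val.
set a := Ordinal (ltn_pmod ((L - n %% L) %% L) hL).
have d : (L %| widen_ord hLN a + n)%N.
  by rewrite /= /dvdn modnDml -/(dvdn L (negL n + n)) negL_dvd.
have e := prodeq' d.
have [xa0 _] := xprime_nz d.
apply: (mulfI xa0); rewrite e /lam.
by field; rewrite xa0 hx.
Qed.

End Main.


Section Gen.
Variable C : numClosedFieldType.
Variables N W : nat.

Definition sqmono (v0 : genvar N W) : {ffun genvar N W -> nat} :=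
  [ffun u => if u == v0 then 2%N else 0%N].

Definition Pgen : mpoly C (genvar N W) :=
  foldr (@mp_mul C _) [:: (1, [ffun => 0%N])]
    [seq [:: (1, sqmono (i, true)); (1, sqmono (i, false))] | i <- enum {: 'I_N + 'I_W}].

Lemma eval_sq (vv : genvar N W -> C) v0 :
  \prod_u vv u ^+ sqmono v0 u = vv v0 ^+ 2.
Proof.
rewrite (bigD1 v0) //= big1 ?mulr1 /sqmono ?ffunE ?eqxx //.
by move=> u hu; rewrite ffunE (negbTE hu) expr0.
Qed.

Lemma Pgen_eval (vv : genvar N W -> C) : mp_eval Pgen vv =
  \prod_(i <- enum {: 'I_N + 'I_W}) (vv (i, true) ^+ 2 + vv (i, false) ^+ 2).
Proof.
rewrite /Pgen; elim: (enum _) => [|i s IH] /=.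
  rewrite /mp_eval big_cons big_nil big_nil addr0 mul1r big1 // => u _.
  by rewrite ffunE expr0.
rewrite mp_eval_mul IH big_cons; congr (_ * _).
by rewrite /mp_eval !big_cons big_nil !mul1r addr0 !eval_sq.
Qed.

Lemma Pgen_nonzero : mp_nonzero Pgen.
Proof.
apply: (@mp_nonzero_of _ _ _ (fun u => if u.2 then 1 else 0)).
rewrite Pgen_eval big1 ?oner_eq0 // => i _.
by rewrite /= expr1n expr0n addr0.
Qed.

Lemma Pgen_generic (x : 'I_N -> C) (w : 'I_W -> C) :
  mp_eval Pgen (realcoords x w) != 0 ->
  (forall n, x n != 0) /\ (forall j, w j != 0).
Proof.
rewrite Pgen_eval => hP; split.
  move=> n; apply/negP => /eqP xn0; move: hP; rewrite prodf_seq_eq0.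
  apply/negP/negPn/hasP; exists (inl n); first by rewrite mem_enum.
  by rewrite /realcoords /= -normC2_Re_Im xn0 normr0 expr0n.
move=> j; apply/negP => /eqP wj0; move: hP; rewrite prodf_seq_eq0.
apply/negP/negPn/hasP; exists (inr j); first by rewrite mem_enum.
by rewrite /realcoords /= -normC2_Re_Im wj0 normr0 expr0n.
Qed.

End Gen.

Unset Implicit Arguments.

Theorem theorem1 (C : numClosedFieldType) (N W L : nat)
  (hL : (1 <= L)%N) (hLW : (L < W)%N) (hWN : (W <= N)%N) :
  exists Om : {set 'I_N * 'I_(Mdim N W L)},
    #|Om| = (N + W - L)%N /\
    exists P : mpoly C (genvar N W),
      mp_nonzero P /\
      forall (x : 'I_N -> C) (w : 'I_W -> C),
        mp_eval P (realcoords x w) != 0 ->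
        forall (x' : 'I_N -> C) (w' : 'I_W -> C),
          (forall km, km \in Om ->
             stft L x' w' km.1 km.2 = stft L x w km.1 km.2) ->
          exists lam : 'I_L -> C, (forall i, lam i != 0) /\ scaled lam x w x' w'.
Proof.
exists (OmSet hL hLW hWN); split; first exact: card_Om.
exists (Pgen C N W); split; first exact: Pgen_nonzero.
move=> x w hP x' w' hmeas.
have [hx hw] := Pgen_generic hP.
exact: (final_scaled hx hw hmeas).
Qed.
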